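(* For every non-negative integer $n$, \[ \sum_{k=0}^{n}(-1)^{k}\frac{2^{2k}}{2k+1}\frac{\binom{n}{k}}{\binom{2k}{k}}=\frac{1}{2n+1} \qquad\text{and}\qquad \sum_{k=0}^{n}(-1)^{k+1}2^{2k}\frac{k}{2k+1}\frac{\binom{n}{k}}{\binom{2k}{k}}=\frac{2n}{(2n+1)(2n-1)}. \] *)

(* Defs.v *)
From mathcomp Require Import all_boot all_order all_algebra.

(* Main.v *)
Require Import Defs.
From mathcomp Require Import all_boot all_order all_algebra.
From mathcomp Require Import zify ring lra.
Import GRing.Theory Num.Theory.
Local Open Scope ring_scope.

Lemma cbinS (k : nat) :
  (k.+1 * 'C((2 * k.+1), k.+1) = 2 * (2 * k).+1 * 'C(2 * k, k))%N.
Proof.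
have h1 := mul_bin_diag (2 * k).+2 k.
have h2 := mul_bin_down (2 * k).+1 k.
rewrite /= in h1 h2.
have e : ((2 * k).+1 - k = k.+1)%N by lia.
rewrite e in h2.
have -> : (2 * k.+1 = (2 * k).+2)%N by lia.
set a := 'C(_, k.+1) in h1 *.
set b := 'C((2*k).+1, k) in h1 h2.
set c := 'C(2*k, k) in h2 *.
nia.
Qed.


Definition tt (n k : nat) : rat :=
  (-1) ^+ k * (2 ^+ (2 * k) / (2 * k + 1)%:R) * ('C(n, k)%:R / 'C(2 * k, k)%:R).
Definition uu (n k : nat) : rat :=
  (-1) ^+ k * 2 ^+ (2 * k) * ('C(n, k)%:R / 'C(2 * k, k)%:R).

Lemma nat_neq0 k : ((k.+1)%:R : rat) != 0.
Proof. by rewrite pnatr_eq0. Qed.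

Lemma binrel n k : (k < n)%N ->
  ('C(n, k.+1)%:R : rat) = (n%:R - k%:R) * 'C(n, k)%:R / k.+1%:R.
Proof.
move=> lt; have h := mul_bin_left n k.
have h' : (k.+1%:R * 'C(n, k.+1)%:R : rat) = (n%:R - k%:R) * 'C(n, k)%:R.
  by rewrite -natrM h natrM natrB // ltnW.
rewrite -h'; field; by rewrite addrC natr1 pnatr_eq0.
Qed.

Lemma cbinrel k : ('C(2 * k.+1, k.+1)%:R : rat) = 2 * (2 * k + 1)%:R * 'C(2 * k, k)%:R / k.+1%:R.
Proof.
have h : (k.+1%:R * 'C(2 * k.+1, k.+1)%:R : rat) = 2 * (2 * k + 1)%:R * 'C(2 * k, k)%:R.
  by rewrite -natrM cbinS !natrM addn1.
rewrite -h; field; by rewrite addrC natr1 pnatr_eq0.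
Qed.

Lemma cbin_neq0 k : ('C(2 * k, k)%:R : rat) != 0.
Proof. rewrite pnatr_eq0 -lt0n bin_gt0; lia. Qed.


Ltac nzt2 m n := repeat (apply/andP; split);
  first [exact: cbin_neq0 | apply: lt0r_neq0; have := ler0n rat m; have := ler0n rat n; lra].
Ltac nzt m := repeat (apply/andP; split);
  first [exact: cbin_neq0 | apply: lt0r_neq0; have := ler0n rat m; lra].

Lemma ttS n m : (m < n)%N -> tt n m.+1 = - 2 * (n%:R - m%:R) * tt n m / (2 * m + 3)%:R.
Proof.
move=> lt; rewrite /tt binrel // cbinrel.
have e1 : (2 * m.+1 + 1 = (2 * m + 2).+1)%N by lia.
have e2 : (2 * m + 1 = (2 * m).+1)%N by lia.
have e3 : (2 * m + 3 = (2 * m + 2).+1)%N by lia.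
rewrite e1 e3 e2 mulnS !exprS.
have := cbin_neq0 m; have := nat_neq0 m; have := nat_neq0 (2 * m); have := nat_neq0 (2 * m + 2).
move=> h1 h2 h3 h4.
move: h1 h2 h3 h4.
set A := ((2 * m + 2).+1%:R : rat); set B := ((2 * m).+1%:R : rat); set C := (m.+1%:R : rat).
set D := ('C(2 * m, m)%:R : rat) => h1 h2 h3 h4.
field; nzt m.
Qed.

Lemma uuS n m : (m < n)%N -> uu n m.+1 = - 2 * (n%:R - m%:R) * uu n m / (2 * m + 1)%:R.
Proof.
move=> lt; rewrite /uu binrel // cbinrel.
have e2 : (2 * m + 1 = (2 * m).+1)%N by lia.
rewrite e2 mulnS !exprS.
rewrite ?natrD ?natrM /=.
field; nzt m.
Qed.

Lemma sum_tt n m : (m <= n)%N ->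
  \sum_(0 <= k < m.+1) tt n k = (1 + 2 * (n%:R - m%:R) * tt n m) / (2 * n + 1)%:R.
Proof.
elim: m => [|m IH] le.
  rewrite big_nat1 /tt /= !expr0 !bin0 !mul1r !mulr1 subr0 !natrD !natrM.
  field; nzt n.
rewrite big_nat_recr //= IH ?(ltnW le) // ttS //.
rewrite ?natrD ?natrM /= -[m.+1]addn1 natrD.
field; nzt2 m n.
Qed.

Lemma sum_uu n m : (m <= n)%N ->
  \sum_(0 <= k < m.+1) uu n k = (- 1 + 2 * (n%:R - m%:R) * uu n m) / ((2 * n)%:R - 1).
Proof.
have hn : ((2 * n)%:R - 1 : rat) != 0.
  case: n => [|n]; first by rewrite muln0 sub0r oppr_eq0 oner_eq0.
  rewrite natrM; apply: lt0r_neq0; have := ler0n rat n; rewrite -natr1; lra.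
elim: m => [|m IH] le.
  rewrite big_nat1 /uu /= !expr0 !bin0 !mul1r !mulr1 subr0.
  by rewrite -natrM addrC divff.
rewrite big_nat_recr //= IH ?(ltnW le) // uuS //.
rewrite ?natrD ?natrM /= -[m.+1]addn1 natrD.
field; apply/andP; split; [by move: hn; rewrite mul2n -addnn natrD | nzt m].
Qed.

Theorem corollary28 (n : nat) :
  \sum_(0 <= k < n.+1)
      (-1) ^+ k * (2 ^+ (2 * k) / (2 * k + 1)%:R) * ('C(n, k)%:R / 'C(2 * k, k)%:R)
    = 1 / (2 * n + 1)%:R :> rat
  /\
  \sum_(0 <= k < n.+1)
      (-1) ^+ k.+1 * 2 ^+ (2 * k) * (k%:R / (2 * k + 1)%:R) * ('C(n, k)%:R / 'C(2 * k, k)%:R)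
    = (2 * n)%:R / ((2 * n + 1)%:R * ((2 * n)%:R - 1)) :> rat.
Proof.
have S1 : \sum_(0 <= k < n.+1) tt n k = 1 / (2 * n + 1)%:R.
  by rewrite sum_tt // subrr mulr0 mul0r addr0.
have S2 : \sum_(0 <= k < n.+1) uu n k = - 1 / ((2 * n)%:R - 1).
  by rewrite sum_uu // subrr mulr0 mul0r addr0.
split; first exact: S1.
have hn : ((2 * n)%:R - 1 : rat) != 0.
  case: n {S1 S2} => [|n]; first by rewrite muln0 sub0r oppr_eq0 oner_eq0.
  rewrite natrM; apply: lt0r_neq0; have := ler0n rat n; rewrite -natr1; lra.
have hn2 : ((2 * n + 1)%:R : rat) != 0 by rewrite addn1 pnatr_eq0.
rewrite (eq_bigr (fun k => tt n k / 2 - uu n k / 2)); last first.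
  move=> k _; rewrite /tt /uu exprS.
  have := cbin_neq0 k; have : ((2 * k + 1)%:R : rat) != 0 by rewrite addn1 pnatr_eq0.
  move=> h1 h2; rewrite ?natrD ?natrM in h1 *; field; nzt k.
rewrite sumrB -!mulr_suml S1 S2.
move: hn hn2; rewrite natrD !natrM => h1 h2; field; by rewrite h1 h2.
Qed.
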